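(* Let $k$ be a commutative artin ring, let $\Lambda$ be an artin $k$-algebra, and let $M$ and $N$ be finite length (left) $\Lambda$-modules. Let $M'\subseteq M$ be a submodule. (1) If $M\leq_{\mathrm{deg}}N$, then there exists a submodule $N'\subseteq N$ such that $M'\leq_{\mathrm{deg}}N'$. (2) If $M\leq_{\mathrm{vdeg}}N$, then there exists a submodule $N'\subseteq N$ such that $M'\leq_{\mathrm{vdeg}}N'$.
   Context: For finite length $\Lambda$-modules $M,N$, one writes $M\leq_{\mathrm{deg}}N$ ($M$ degenerates to $N$) if there exist a finite length $\Lambda$-module $X$ and a short exact sequence of $\Lambda$-modules $0\to X\to M\oplus X\to N\to 0$. One writes $M\leq_{\mathrm{vdeg}}N$ ($M$ virtually degenerates to $N$) if there exists a finite length $\Lambda$-module $Y$ with $Y\oplus M\leq_{\mathrm{deg}}Y\oplus N$. *)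

(* Defs.v *)
From mathcomp Require Import all_boot all_algebra.
Set Implicit Arguments. Unset Strict Implicit. Unset Printing Implicit Defensive.
Import GRing.Theory.
Local Open Scope ring_scope.

Definition is_ideal (k : comPzRingType) (I : k -> Prop) : Prop :=
  I 0 /\ (forall x y, I x -> I y -> I (x - y)) /\ (forall a x, I x -> I (a * x)).

Definition artinian_ring (k : comPzRingType) : Prop :=
  forall I : nat -> k -> Prop,
    (forall n, is_ideal (I n)) ->
    (forall n x, I n.+1 x -> I n x) ->
    exists n, forall m, (n <= m)%N -> forall x, I m x <-> I n x.

Definition artin_algebra (k : comPzRingType) (L : algType k) : Prop :=
  artinian_ring k /\
  exists s : seq L, forall x : L,
    exists c : 'I_(size s) -> k, x = \sum_(i < size s) c i *: s`_i.

Definition is_submodule (R : pzRingType) (M : lmodType R) (S : M -> Prop) : Prop :=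
  S 0 /\ (forall x y, S x -> S y -> S (x - y)) /\ (forall a x, S x -> S (a *: x)).

Definition finite_length (R : pzRingType) (M : lmodType R) : Prop :=
  exists n : nat, forall (m : nat) (S : nat -> M -> Prop),
    (forall i, is_submodule (S i)) ->
    (forall i, (i < m)%N ->
       (forall x, S i x -> S i.+1 x) /\ exists x, S i.+1 x /\ ~ S i x) ->
    (m <= n)%N.

Definition short_exact (R : pzRingType) (A B C : lmodType R)
  (f : {linear A -> B}) (g : {linear B -> C}) : Prop :=
  injective f /\ (forall c, exists b, g b = c) /\
  (forall b, g b = 0 <-> exists a, b = f a).

Definition deg_le (R : pzRingType) (M N : lmodType R) : Prop :=
  exists (X : lmodType R), finite_length X /\
  exists (f : {linear X -> (M * X)%type}) (g : {linear (M * X)%type -> N}),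
    short_exact f g.

Definition vdeg_le (R : pzRingType) (M N : lmodType R) : Prop :=
  exists (Y : lmodType R), finite_length Y /\ deg_le (Y * M)%type (Y * N)%type.

Definition submodule_of (R : pzRingType) (N' N : lmodType R) : Prop :=
  exists i : {linear N' -> N}, injective i.

(* Main.v *)
From HB Require Import structures.
Require Import Defs.
From mathcomp Require Import all_boot all_algebra.
From Stdlib Require Import ClassicalEpsilon Classical.
Set Implicit Arguments. Unset Strict Implicit. Unset Printing Implicit Defensive.
Import GRing.Theory.
Local Open Scope ring_scope.

Definition pb (P : Prop) : bool := if excluded_middle_informative P then true else false.
Lemma pbP (P : Prop) : reflect P (pb P).
Proof. rewrite /pb; case: excluded_middle_informative => H; [by left|by right]. Qed.

Record submod (R : pzRingType) (V : lmodType R) := Submod {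
  sp :> V -> Prop; spP : is_submodule sp }.

Section Sub.
Variables (R : pzRingType) (V : lmodType R) (S : submod V).
Definition sp_pred : {pred V} := fun x => pb (S x).
Lemma sp_closed : GRing.submod_closed sp_pred.
Proof.
have [H0 [HS HZ]] := spP S.
split; first by apply/pbP.
move=> a u v /pbP Hu /pbP Hv; apply/pbP.
have -> : a *: u + v = a *: u - (0 - v) by rewrite sub0r opprK.
exact: (HS _ _ (HZ _ _ Hu) (HS _ _ H0 Hv)).
Qed.
HB.instance Definition _ := GRing.isSubmodClosed.Build R V sp_pred sp_closed.
Record subm := Subm { smval : V; smvalP : smval \in sp_pred }.
HB.instance Definition _ := [isSub for smval].
HB.instance Definition _ := [Choice of subm by <:].
HB.instance Definition _ := [SubChoice_isSubLmodule of subm by <:].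
Lemma sval_in (x : subm) : S (smval x).
Proof. exact/pbP/smvalP. Qed.
Definition subm_of (x : V) (H : S x) : subm := Subm (introT (pbP _) H).
End Sub.
Arguments smval {R V S}.

Definition mkLin (R : pzRingType) (A B : lmodType R) (h : A -> B)
  (H : forall a u v, h (a *: u + v) = a *: h u + h v) : {linear A -> B} :=
  HB.pack h (GRing.isLinear.Build R A B *:%R h H).

Lemma mkLinE (R : pzRingType) (A B : lmodType R) (h : A -> B) H x : @mkLin R A B h H x = h x.
Proof. by []. Qed.

Lemma smvalD (R : pzRingType) (V : lmodType R) (S : submod V) (x y : subm S) :
  smval (x + y) = smval x + smval y. Proof. by []. Qed.
Lemma smvalZ (R : pzRingType) (V : lmodType R) (S : submod V) a (x : subm S) :
  smval (a *: x) = a *: smval x. Proof. by []. Qed.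
Lemma smval0 (R : pzRingType) (V : lmodType R) (S : submod V) :
  smval (0 : subm S) = 0. Proof. by []. Qed.
Lemma smvalB (R : pzRingType) (V : lmodType R) (S : submod V) (x y : subm S) :
  smval (x - y) = smval x - smval y. Proof. by []. Qed.
Lemma smval_inj (R : pzRingType) (V : lmodType R) (S : submod V) :
  injective (@smval R V S). Proof. exact: val_inj. Qed.
Lemma smval_of (R : pzRingType) (V : lmodType R) (S : submod V) x (H : S x) :
  smval (subm_of H) = x. Proof. by []. Qed.

Definition smvalL (R : pzRingType) (V : lmodType R) (S : submod V) : {linear subm S -> V} :=
  @mkLin R (subm S) V (@smval R V S) (fun a u v => erefl).

Lemma sub_image (R : pzRingType) (A B : lmodType R) (h : {linear A -> B}) (P : A -> Prop) :
  is_submodule P -> is_submodule (fun b => exists a, P a /\ h a = b).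
Proof.
move=> [P0 [PB PZ]]; split; first by exists 0; rewrite linear0.
split.
  move=> x y [a [Ha <-]] [b [Hb <-]]; exists (a - b); split; first exact: PB.
  by rewrite linearB.
move=> r x [a [Ha <-]]; exists (r *: a); split; first exact: PZ.
by rewrite linearZ.
Qed.

Lemma sub_preimage (R : pzRingType) (A B : lmodType R) (h : {linear A -> B}) (P : B -> Prop) :
  is_submodule P -> is_submodule (fun a => P (h a)).
Proof.
move=> [P0 [PB PZ]]; split; first by rewrite linear0.
split; first by move=> x y Hx Hy; rewrite linearB; apply: PB.
by move=> r x Hx; rewrite linearZ; apply: PZ.
Qed.

Lemma FL_inj (R : pzRingType) (A B : lmodType R) (h : {linear A -> B}) :
  injective h -> finite_length B -> finite_length A.
Proof.
move=> hi [n Hn]; exists n => m S HS Hch.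
apply: (Hn m (fun i b => exists a, S i a /\ h a = b)).
  by move=> i; apply: sub_image.
move=> i lti; have [Hinc [x [Hx Hnx]]] := Hch i lti; split.
  by move=> b [a [Ha <-]]; exists a; split => //; apply: Hinc.
exists (h x); split; first by exists x.
by move=> [a [Ha /hi E]]; apply: Hnx; rewrite -E.
Qed.
Lemma chain_mono (T : Type) (C : nat -> T -> Prop) (m : nat) :
  (forall i, (i < m)%N -> forall x, C i x -> C i.+1 x) ->
  forall p q, (p <= q)%N -> (q <= m)%N -> forall x, C p x -> C q x.
Proof.
move=> Hc p; elim=> [|q IH] Hpq Hqm x Hx.
  by move: Hpq; rewrite leqn0 => /eqP <-.
move: Hpq; rewrite leq_eqVlt => /orP [/eqP <- // | Hpq].
apply: Hc => //; apply: IH => //; exact: ltnW.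
Qed.

Definition strict_at (T : Type) (C : nat -> T -> Prop) (i : nat) : bool :=
  pb (exists x, C i.+1 x /\ ~ C i x).

Lemma count_strict (R : pzRingType) (A : lmodType R) (n : nat) :
  (forall (m : nat) (S : nat -> A -> Prop),
    (forall i, is_submodule (S i)) ->
    (forall i, (i < m)%N ->
       (forall x, S i x -> S i.+1 x) /\ exists x, S i.+1 x /\ ~ S i x) ->
    (m <= n)%N) ->
  forall m (C : nat -> A -> Prop), (forall i, is_submodule (C i)) ->
  (forall i, (i < m)%N -> forall x, C i x -> C i.+1 x) ->
  (count (strict_at C) (iota 0 m) <= n)%N.
Proof.
move=> Hn m C HC Hmon.
set idx := filter (strict_at C) (iota 0 m).
have Hsz : size idx = count (strict_at C) (iota 0 m) by rewrite size_filter.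
have Hsort : sorted ltn idx.
  by apply: sorted_filter; [exact: ltn_trans | exact: iota_ltn_sorted].
have Hmem : forall j, (j < size idx)%N ->
    (nth m idx j < m)%N /\ strict_at C (nth m idx j).
  move=> j Hj; have := mem_nth m Hj; rewrite mem_filter mem_iota add0n.
  by case/andP => -> /andP [_ ->].
rewrite -Hsz; apply: (Hn _ (fun j => C (nth m idx j))) => // j Hj.
have [Ham Hst] := Hmem j Hj.
have Hab : (nth m idx j < nth m idx j.+1)%N.
  case: (ltnP j.+1 (size idx)) => Hj1.
    by apply: (sorted_ltn_nth ltn_trans) => //; rewrite inE.
  by rewrite (nth_default m Hj1).
have Hbm : (nth m idx j.+1 <= m)%N.
  case: (ltnP j.+1 (size idx)) => Hj1.
    by apply: ltnW; case: (Hmem _ Hj1).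
  by rewrite (nth_default m Hj1).
have Hup : forall x, C (nth m idx j).+1 x -> C (nth m idx j.+1) x.
  by apply: (chain_mono Hmon).
split.
  by move=> x Hx; apply: Hup; apply: Hmon.
move/pbP: Hst => [x [Hx1 Hx2]]; exists x; split => //; exact: Hup.
Qed.

Lemma FL_prod (R : pzRingType) (A B : lmodType R) :
  finite_length A -> finite_length B -> finite_length (A * B)%type.
Proof.
move=> [nA HA] [nB HB]; exists (nA + nB)%N => m S HS Hch.
pose a i x := S i (x, 0 : B).
pose b i y := exists x : A, S i (x, y).
have Ha : forall i, is_submodule (a i).
  move=> i; have [S0 [SB SZ]] := HS i; split; first exact: S0.
  split; first by move=> x y Hx Hy; rewrite /a -[0 : B]subr0; exact: (SB (x, 0) (y, 0)).
  by move=> r x Hx; rewrite /a -(scaler0 _ r); exact: (SZ r (x, 0)).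
have Hb : forall i, is_submodule (b i).
  move=> i; have [S0 [SB SZ]] := HS i; split; first by exists 0.
  split; first by move=> x y [x1 Hx] [y1 Hy]; exists (x1 - y1); exact: (SB (x1, x) (y1, y)).
  by move=> r x [x1 Hx]; exists (r *: x1); exact: (SZ r (x1, x)).
have Hma : forall i, (i < m)%N -> forall x, a i x -> a i.+1 x.
  by move=> i Hi x; case: (Hch i Hi) => H _; apply: H.
have Hmb : forall i, (i < m)%N -> forall x, b i x -> b i.+1 x.
  by move=> i Hi x [x1 Hx]; exists x1; case: (Hch i Hi) => H _; apply: H.
have Hor : forall i, i \in iota 0 m -> strict_at a i || strict_at b i.
  move=> i; rewrite mem_iota add0n /= => Hi.
  case: (Hch i Hi) => Hinc [[x y] [Hxy Hnxy]].
  apply/negPn/negP; rewrite negb_or => /andP [/pbP Hna /pbP Hnb].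
  have Hyb : b i y.
    apply: NNPP => Hn; apply: Hnb; exists y; split => //; by exists x.
  case: Hyb => x' Hx'.
  have Hd : a i.+1 (x - x').
    rewrite /a -[0 : B](subrr y); exact: ((HS i.+1).2.1 (x, y) (x', y) Hxy (Hinc _ Hx')).
  have Hd' : a i (x - x').
    apply: NNPP => Hn; apply: Hna; by exists (x - x').
  apply: Hnxy.
  have -> : (x, y) = (x - x', 0) - (0 - (x', y)).
    by rewrite sub0r opprK; congr pair; rewrite ?subrK ?add0r.
  apply: (HS i).2.1 => //; apply: (HS i).2.1 => //; exact: (HS i).1.
have Hcnt : (m <= count (strict_at a) (iota 0 m) + count (strict_at b) (iota 0 m))%N.
  rewrite -count_predUI.
  apply: (leq_trans _ (leq_addr _ _)).
  rewrite -[X in (X <= _)%N](size_iota 0 m) -count_predT.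
  rewrite (eq_in_count (a2 := predU (strict_at a) (strict_at b))) //.
  by move=> i Hi /=; rewrite (Hor i Hi).
apply: (leq_trans Hcnt); apply: leq_add.
  exact: (count_strict HA Ha Hma).
exact: (count_strict HB Hb Hmb).
Qed.

Section WM.
Variables (R : pzRingType) (A X : lmodType R) (f : {linear X -> (A * X)%type}).
Definition f2 (x : X) : X := (f x).2.
Definition f1 (x : X) : A := (f x).1.
Definition itf n x := iter n f2 x.
Lemma f2_lin a u v : f2 (a *: u + v) = a *: f2 u + f2 v.
Proof. by rewrite /f2 linearP. Qed.
Lemma f1_lin a u v : f1 (a *: u + v) = a *: f1 u + f1 v.
Proof. by rewrite /f1 linearP. Qed.
Lemma itf_lin n a u v : itf n (a *: u + v) = a *: itf n u + itf n v.
Proof. by elim: n => //= n IH; rewrite IH f2_lin. Qed.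
Definition f1L := mkLin f1_lin.
Definition f2L := mkLin f2_lin.
Definition itfL n := mkLin (itf_lin n).
Definition Wp (C : A -> Prop) (x : X) := forall n, C (f1 (itf n x)).

Lemma Wp_sub C : is_submodule C -> is_submodule (Wp C).
Proof.
move=> [C0 [CB CZ]]; split.
  move=> n; have -> : f1 (itf n 0) = f1L (itfL n 0) by [].
  by rewrite !linear0.
split.
  move=> x y Hx Hy n.
  have -> : f1 (itf n (x - y)) = f1L (itfL n (x - y)) by [].
  by rewrite !linearB; apply: CB; [apply: Hx | apply: Hy].
move=> a x Hx n.
have -> : f1 (itf n (a *: x)) = f1L (itfL n (a *: x)) by [].
by rewrite !linearZ; apply: CZ; apply: Hx.
Qed.

Lemma Wp_shift C x : Wp C x -> Wp C (f2 x).
Proof. by move=> H n; have := H n.+1; rewrite /itf iterSr. Qed.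

Lemma Wp_max C x : C (f1 x) -> Wp C (f2 x) -> Wp C x.
Proof. by move=> H1 H2 [|n] //; have := H2 n; rewrite /itf iterSr. Qed.

Lemma Wp_mono (C D : A -> Prop) x : (forall a, C a -> D a) -> Wp C x -> Wp D x.
Proof. by move=> H Hx n; apply: H. Qed.

Variables (B : lmodType R) (e : {linear B -> A}) (C : A -> Prop).
Hypotheses (HC : is_submodule C) (einj : injective e)
  (HCe : forall a, C a <-> exists b, e b = a).

Definition WS := Submod (Wp_sub HC).
Definition Wt := subm WS.
Definition pinv (a : A) : B := epsilon (inhabits 0) (fun b => e b = a).
Lemma pinvK a : C a -> e (pinv a) = a.
Proof. by move/HCe => H; apply: (epsilon_spec (inhabits 0) (fun b => e b = a)). Qed.

Lemma Wt_in (w : Wt) : Wp C (smval w).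
Proof. exact: (sval_in w). Qed.

Definition fp (w : Wt) : (B * Wt)%type :=
  (pinv (f1 (smval w)), @subm_of _ _ WS _ (Wp_shift (Wt_in w))).

Lemma fp_lin a u v : fp (a *: u + v) = a *: fp u + fp v.
Proof.
rewrite /fp; congr pair.
  apply: einj; rewrite linearP !pinvK; first by rewrite smvalD smvalZ f1_lin.
  - by have := Wt_in v 0.
  - by have := Wt_in u 0.
  - by have := Wt_in (a *: u + v) 0.
by apply: smval_inj; rewrite smval_of /= f2_lin.
Qed.
Definition fpL : {linear Wt -> (B * Wt)%type} := mkLin fp_lin.

Definition emb (s : (B * Wt)%type) : (A * X)%type := (e s.1, smval s.2).
Lemma emb_lin a u v : emb (a *: u + v) = a *: emb u + emb v.
Proof. by rewrite /emb /= linearP. Qed.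
Definition embL : {linear (B * Wt)%type -> (A * X)%type} := mkLin emb_lin.
Lemma emb_inj : injective emb.
Proof.
move=> [b w] [b' w'] [/einj -> /smval_inj ->] //.
Qed.

Lemma emb_fp w : emb (fp w) = f (smval w).
Proof.
rewrite /emb /fp /= pinvK; last by have := Wt_in w 0.
by rewrite /f1 /f2; case: (f _).
Qed.

Lemma emb_max s x : emb s = f x -> Wp C x.
Proof.
case: s => b w; rewrite /emb /= => Hf.
apply: Wp_max.
  by apply/HCe; exists b; rewrite /f1 -Hf.
by rewrite /f2 -Hf /=; exact: Wt_in.
Qed.
End WM.

Lemma true_sub (R : pzRingType) (A : lmodType R) : is_submodule (fun _ : A => True).
Proof. by []. Qed.

Lemma imi_sub (R : pzRingType) (A B : lmodType R) (h : {linear B -> A}) :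
  is_submodule (fun a => exists b, h b = a).
Proof.
split; first by exists 0; rewrite linear0.
split; first by move=> x y [a <-] [b <-]; exists (a - b); rewrite linearB.
by move=> r x [a <-]; exists (r *: a); rewrite linearZ.
Qed.

Lemma part1 (R : pzRingType) (M N M' : lmodType R) (i : {linear M' -> M}) :
  injective i -> deg_le M N -> exists N' : lmodType R, submodule_of N' N /\ deg_le M' N'.
Proof.
move=> iinj [X [FX [f [g [finj [gsurj gker]]]]]].
pose C := fun a : M => exists b, i b = a.
have HC : is_submodule C by apply: imi_sub.
have HCe : forall a, C a <-> exists b, i b = a by [].
pose W := Wt f HC.
pose E := embL f i HC.
pose F := fpL f HC iinj HCe.
have GlinP : forall a u v, g (E (a *: u + v)) = a *: g (E u) + g (E v).
  by move=> a u v; rewrite !linearP.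
pose GL := mkLin GlinP.
pose NS := Submod (sub_image GL (true_sub (M' * W)%type)).
pose gp (s : (M' * W)%type) : subm NS := @subm_of _ _ NS (GL s) (ex_intro _ s (conj I erefl)).
have gplin : forall a u v, gp (a *: u + v) = a *: gp u + gp v.
  by move=> a u v; apply: smval_inj; rewrite /gp smvalD smvalZ !smval_of linearP.
pose gpL := mkLin gplin.
exists (subm NS); split.
  by exists (smvalL NS); apply: smval_inj.
exists W; split.
  by apply: (@FL_inj _ _ _ (smvalL (WS f HC))) => //; apply: smval_inj.
exists F, gpL; split.
  move=> w w' H; apply: smval_inj; apply: finj.
  by rewrite -(emb_fp HCe w) -(emb_fp HCe w'); congr emb.
split.
  move=> n; have [s [_ Hs]] := sval_in n; exists s; by apply: smval_inj.
move=> s; split.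
  move=> H0.
  have Hg : g (E s) = 0 by have := congr1 smval H0; rewrite smval_of.
  have [x Hx] := (gker (E s)).1 Hg.
  have Wx := emb_max HCe Hx.
  exists (@subm_of _ _ (WS f HC) x Wx).
  apply: (emb_inj iinj); rewrite [RHS](emb_fp HCe); exact Hx.
move=> [w ->]; apply: smval_inj; rewrite smval0.
have -> : smval (gpL (F w)) = g (E (F w)) by [].
have -> : E (F w) = f (smval w) by exact: (emb_fp HCe w).
by apply/gker; exists (smval w).
Qed.

Lemma zero_sub (R : pzRingType) (A : lmodType R) : is_submodule (fun y : A => y = 0).
Proof.
split => //; split; first by move=> x y -> ->; rewrite subr0.
by move=> a x ->; rewrite scaler0.
Qed.

Lemma prod_sub (R : pzRingType) (A B : lmodType R) (P : A -> Prop) (Q : B -> Prop) :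
  is_submodule P -> is_submodule Q -> is_submodule (fun s : (A * B)%type => P s.1 /\ Q s.2).
Proof.
move=> [P0 [PB PZ]] [Q0 [QB QZ]]; split => //; split.
  by move=> x y [H1 H2] [H3 H4]; split; [apply: PB | apply: QB].
by move=> a x [H1 H2]; split; [apply: PZ | apply: QZ].
Qed.

Section P2.
Variables (R : pzRingType) (M N M' Y X : lmodType R) (i : {linear M' -> M}).
Variables (f : {linear X -> ((Y * M) * X)%type}) (g : {linear ((Y * M) * X)%type -> (Y * N)%type}).

Definition CP (P : Y -> Prop) (a : (Y * M)%type) := P a.1 /\ exists m, i m = a.2.
Definition Phi (P : Y -> Prop) (y : Y) :=
  exists s : ((Y * M) * X)%type, CP P s.1 /\ Wp f (CP P) s.2 /\ (g s).1 = y.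

Lemma CP_sub P : is_submodule P -> is_submodule (CP P).
Proof. by move=> HP; apply: (prod_sub HP (imi_sub i)). Qed.

Lemma g1_lin a u v : (g (a *: u + v)).1 = a *: (g u).1 + (g v).1.
Proof. by rewrite linearP. Qed.

Lemma Phi_sub P : is_submodule P -> is_submodule (Phi P).
Proof.
move=> HP.
have H := sub_image (mkLin g1_lin) (prod_sub (CP_sub HP) (Wp_sub f (CP_sub HP))).
case: H => [[s [Hs E0]] [Hsb HZ]]; split.
  by case: Hs => Hs1 Hs2; exists s.
split.
  move=> x y [s1 [A1 [A2 A3]]] [s2 [B1 [B2 B3]]].
  have [t [[T1 T2] T3]] := Hsb x y (ex_intro _ s1 (conj (conj A1 A2) A3)) (ex_intro _ s2 (conj (conj B1 B2) B3)).
  by exists t.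
move=> a x [s1 [A1 [A2 A3]]].
have [t [[T1 T2] T3]] := HZ a x (ex_intro _ s1 (conj (conj A1 A2) A3)).
by exists t.
Qed.

Lemma Phi_mono (P Q : Y -> Prop) : (forall y, P y -> Q y) -> forall y, Phi P y -> Phi Q y.
Proof.
move=> H y [s [[C1 C2] [C3 C4]]]; exists s; split; first by split => //; apply: H.
split => //; apply: (Wp_mono (C := CP P)) => // a [a1 a2]; split => //; exact: H.
Qed.

Lemma Phi0 P : is_submodule P -> Phi P 0.
Proof. by move=> HP; have [] := Phi_sub HP. Qed.

Fixpoint Pk (k : nat) : Y -> Prop :=
  match k with 0 => fun y => y = 0 | k'.+1 => Phi (Pk k') end.

Lemma Pk_sub k : is_submodule (Pk k).
Proof. elim: k => [|k IH] /=; [exact: zero_sub | exact: Phi_sub]. Qed.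

Lemma Pk_mono k : forall y, Pk k y -> Pk k.+1 y.
Proof.
elim: k => [|k IH] y /=.
  by move=> ->; apply: Phi0; exact: zero_sub.
by apply: Phi_mono.
Qed.

Lemma Pk_fix : finite_length Y -> exists k, forall y, Pk k.+1 y -> Pk k y.
Proof.
move=> [n Hn]; apply: NNPP => Hno.
have Hall : forall k, exists y, Pk k.+1 y /\ ~ Pk k y.
  move=> k; apply: NNPP => Hk; apply: Hno; exists k => y Hy.
  apply: NNPP => Hny; apply: Hk; by exists y.
have : (n.+1 <= n)%N.
  apply: (Hn n.+1 Pk Pk_sub) => j _; split; first exact: Pk_mono.
  exact: Hall.
by rewrite ltnn.
Qed.
End P2.

Lemma part2_core (R : pzRingType) (M N M' Y X : lmodType R) (i : {linear M' -> M})
  (f : {linear X -> ((Y * M) * X)%type}) (g : {linear ((Y * M) * X)%type -> (Y * N)%type})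
  (P : Y -> Prop) (HP : is_submodule P)
  (Hfix1 : forall y, Phi i f g P y -> P y) (Hfix2 : forall y, P y -> Phi i f g P y) :
  injective i -> finite_length Y -> finite_length M -> finite_length X ->
  injective f -> (forall b, g b = 0 <-> exists a, b = f a) ->
  exists N' : lmodType R, submodule_of N' N /\ vdeg_le M' N'.
Proof.
move=> iinj FY FM FX finj gker.
pose ZS := Submod HP.
pose Z := subm ZS.
pose e (b : (Z * M')%type) : (Y * M)%type := (smval b.1, i b.2).
have elin : forall a u v, e (a *: u + v) = a *: e u + e v.
  by move=> a u v; rewrite /e /= linearP.
pose eL := mkLin elin.
have einj : injective eL.
  by move=> [z m] [z' m'] [/smval_inj -> /iinj ->].
have HCP := CP_sub i HP.
have HCe : forall a, CP i P a <-> exists b, eL b = a.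
  move=> [y m]; split.
    by move=> [/= Hy [m' Hm]]; exists (@subm_of _ _ ZS y Hy, m'); rewrite -Hm.
  by move=> [[z m'] [<- <-]]; split; [exact (sval_in z) | exists m'].
pose W := Wt f HCP.
pose E := embL f eL HCP.
pose F := fpL f HCP einj HCe.
have EF : forall w, E (F w) = f (smval w) by move=> w; exact: (emb_fp HCe w).
have g1lin : forall a u v, (g (E (a *: u + v))).1 = a *: (g (E u)).1 + (g (E v)).1.
  by move=> a u v; rewrite !linearP.
have g2lin : forall a u v, (g (E (a *: u + v))).2 = a *: (g (E u)).2 + (g (E v)).2.
  by move=> a u v; rewrite !linearP.
pose G1 := mkLin g1lin.
pose G2 := mkLin g2lin.
pose KS := Submod (sub_preimage G1 (zero_sub Y)).
pose K := subm KS.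
pose NS := Submod (sub_image G2 (sub_preimage G1 (zero_sub Y))).
pose Nt := subm NS.
have Hq : forall s, P (G1 s).
  move=> s; apply: Hfix1; exists (E s); split.
    by apply/HCe; exists s.1.
  by split; [exact: (Wt_in s.2) | ].
pose q (s : ((Z * M') * W)%type) : Z := @subm_of _ _ ZS _ (Hq s).
have qlin : forall a u v, q (a *: u + v) = a *: q u + q v.
  by move=> a u v; apply: smval_inj; exact (linearP G1 a u v).
pose qL := mkLin qlin.
have HN : forall k : K, NS (G2 (smval k)).
  move=> k; exists (smval k); split => //; exact: (sval_in k).
pose Gam (x : ((Z * M') * (W * K))%type) : (Z * Nt)%type :=
  (q (x.1, x.2.1), @subm_of _ _ NS _ (HN x.2.2)).
have Gamlin : forall a u v, Gam (a *: u + v) = a *: Gam u + Gam v.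
  move=> a u v; rewrite /Gam /=; congr pair.
    exact (qlin a (u.1, u.2.1) (v.1, v.2.1)).
  by apply: smval_inj; exact (linearP G2 a (smval u.2.2) (smval v.2.2)).
pose GamL := mkLin Gamlin.
have HK : forall w : W, KS (F w).
  move=> w; rewrite /= /G1 /=.
  have -> : g (E (F w)) = 0 by rewrite EF; apply/gker; exists (smval w).
  by [].
pose ff (x : (W * K)%type) : ((Z * M') * (W * K))%type :=
  ((smval x.2).1, ((smval x.2).2, @subm_of _ _ KS _ (HK x.1))).
have fflin : forall a u v, ff (a *: u + v) = a *: ff u + ff v.
  move=> a u v; rewrite /ff /=; congr pair; congr pair.
  by apply: smval_inj; exact (linearP F a u.1 v.1).
pose ffL := mkLin fflin.
exists Nt; split.
  by exists (smvalL NS); apply: smval_inj.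
exists Z; split.
  by apply: (@FL_inj _ _ _ (smvalL ZS)) => //; apply: smval_inj.
exists (W * K)%type; split.
  have FW : finite_length W.
    by apply: (@FL_inj _ _ _ (smvalL (WS f HCP))) => //; apply: smval_inj.
  have FD : finite_length ((Y * M) * X)%type by apply: FL_prod => //; apply: FL_prod.
  have kl : forall a (u v : K), E (smval (a *: u + v)) = a *: E (smval u) + E (smval v).
    by move=> a u v; rewrite -linearP.
  have FK : finite_length K.
    apply: (@FL_inj _ _ _ (mkLin kl)) FD => k k' H; apply: smval_inj; apply: (emb_inj einj); exact H.
  exact: FL_prod.
exists ffL, GamL; split.
  move=> [w k] [w' k'] H.
  have H1 : ff (w, k) = ff (w', k') := H.
  have Ha := congr1 (fun x => x.1) H1.
  have Hb := congr1 (fun x => x.2.1) H1.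
  have Hc := congr1 (fun x => smval x.2.2) H1.
  simpl in Ha, Hb, Hc.
  have Hk : k = k'.
    apply: smval_inj; rewrite (surjective_pairing (smval k)) (surjective_pairing (smval k')).
    by rewrite Ha Hb.
  have Hw : w = w'.
    apply: smval_inj; apply: finj; rewrite -!EF; exact (congr1 E Hc).
  by rewrite Hk Hw.
split.
  move=> [z n].
  have [s0 [Hs0 Hs0']] := sval_in n.
  have [d [Cd [Wd gd]]] := Hfix2 _ (sval_in z).
  have [b Hb] := (HCe d.1).1 Cd.
  pose w := @subm_of _ _ (WS f HCP) _ Wd.
  exists (b, (w, @subm_of _ _ KS s0 Hs0)).
  change (Gam (b, (w, @subm_of _ _ KS s0 Hs0)) = (z, n)).
  rewrite /Gam /=; congr pair; apply: smval_inj => /=.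
    change ((g (E (b, w))).1 = smval z).
    have -> : E (b, w) = d by rewrite (surjective_pairing d) -Hb.
    exact gd.
  exact Hs0'.
move=> x; split.
  move=> H0.
  have H : Gam x = 0 := H0.
  case: x H {H0} => b [w k] H.
  have Hq0 := congr1 (fun x => smval x.1) H.
  have Hn0 := congr1 (fun x => smval x.2) H.
  simpl in Hq0, Hn0.
  have Hk1 : G1 (smval k) = 0 := sval_in k.
  have Hg : g (E (smval k)) = 0.
    rewrite (surjective_pairing (g _)).
    have -> : (g (E (smval k))).1 = 0 := Hk1.
    have -> : (g (E (smval k))).2 = 0 := Hn0.
    by [].
  have [x0 Hx0] := (gker _).1 Hg.
  have Wx0 := emb_max HCe Hx0.
  pose w0 := @subm_of _ _ (WS f HCP) _ Wx0.
  have Fw0 : F w0 = smval k.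
    apply: (emb_inj einj).
    have -> : emb eL (F w0) = E (F w0) by [].
    rewrite EF; exact (esym Hx0).
  have HKbw : KS (b, w) := Hq0.
  exists (w0, @subm_of _ _ KS _ HKbw).
  change ((b, (w, k)) = ff (w0, @subm_of _ _ KS _ HKbw)).
  rewrite /ff /=; congr pair; congr pair.
  by apply: smval_inj; rewrite /=; exact (esym Fw0).
move=> [[w0 k0] ->].
change (Gam (ff (w0, k0)) = (0, 0)).
rewrite /Gam /ff /=; congr pair; apply: smval_inj => /=.
  rewrite -surjective_pairing; exact (sval_in k0).
change ((g (E (F w0))).2 = 0).
rewrite EF.
have -> : g (f (smval w0)) = 0 by apply/gker; exists (smval w0).
by [].
Qed.

Lemma part2 (R : pzRingType) (M N M' : lmodType R) (i : {linear M' -> M}) :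
  injective i -> finite_length M -> vdeg_le M N ->
  exists N' : lmodType R, submodule_of N' N /\ vdeg_le M' N'.
Proof.
move=> iinj FM [Y [FY [X [FX [f [g [finj [gsurj gker]]]]]]]].
have [k Hk] := Pk_fix i f g FY.
exact (@part2_core R M N M' Y X i f g (Pk i f g k) (Pk_sub i f g k) Hk (@Pk_mono _ _ _ _ _ _ i f g k) iinj FY FM FX finj gker).
Qed.

Unset Implicit Arguments.
Theorem theorem1p5 (k : comPzRingType) (L : algType k) (M N M' : lmodType L)
  (i : {linear M' -> M}) :
  artin_algebra L -> finite_length M -> finite_length N -> injective i ->
  (deg_le M N -> exists N' : lmodType L, submodule_of N' N /\ deg_le M' N') /\
  (vdeg_le M N -> exists N' : lmodType L, submodule_of N' N /\ vdeg_le M' N').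
Proof.
move=> _ FM _ iinj; split => H; [exact: (part1 iinj H) | exact: (part2 iinj FM H)].
Qed.
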